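(* Let $\mathrm{M}$ be a (loopless) matroid of rank $d+1$. For every $J\subseteq[d]$, $N_J(\mathrm{U}_{d+1})\le N_J(\mathrm{M})$.
   Context: $\mathrm{U}_{d+1}$ is the Boolean matroid on $d+1$ elements. For $J=\{j_1<\cdots<j_m\}\subseteq[d]=\{1,\dots,d\}$, $N_J(\mathrm{M})$ is the number of chains of flats $G_1\subsetneq\cdots\subsetneq G_m$ of $\mathrm{M}$ with $\operatorname{rk}(G_\ell)=j_\ell$ for all $\ell$. *)

(* Defs.v *)
From mathcomp Require Import all_boot.
Set Implicit Arguments. Unset Strict Implicit. Unset Printing Implicit Defensive.

Definition matroid_rank (T : finType) (r : {set T} -> nat) : Prop :=
  [/\ forall A : {set T}, r A <= #|A|,
      forall A B : {set T}, A \subset B -> r A <= r B &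
      forall A B : {set T}, r (A :|: B) + r (A :&: B) <= r A + r B].

Definition loopless (T : finType) (r : {set T} -> nat) : Prop :=
  forall x : T, r [set x] = 1.

Definition flat (T : finType) (r : {set T} -> nat) (F : {set T}) : bool :=
  [forall x, (x \notin F) ==> (r F < r (x |: F))].

(* A subset J = {j_1 < ... < j_m} of [d] is represented by its increasing
   enumeration [:: j_1; ...; j_m]. *)
Definition subset_of_range (d : nat) (J : seq nat) : Prop :=
  sorted ltn J /\ all (fun j => 0 < j <= d) J.

Definition flag_chain (T : finType) (r : {set T} -> nat) (J : seq nat)
  (G : (size J).-tuple {set T}) : bool :=
  [forall i : 'I_(size J),
     flat r (tnth G i) && (r (tnth G i) == nth 0 J i)] &&
  [forall i : 'I_(size J),
     (i.+1 < size J) ==> (nth set0 G i \proper nth set0 G i.+1)].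

Definition N_J (T : finType) (r : {set T} -> nat) (J : seq nat) : nat :=
  #|[set G : (size J).-tuple {set T} | @flag_chain T r J G]|.

Definition boolean_rank (n : nat) (A : {set 'I_n}) : nat := #|A|.

(* Main.v *)
Require Import Defs.
From mathcomp Require Import all_boot.
From mathcomp Require Import zify.

Section Mat.
Variables (T : finType) (r : {set T} -> nat).
Hypothesis hr : matroid_rank r.

Let r_le (A : {set T}) : r A <= #|A|. Proof. by case: hr. Qed.
Let r_mono (A B : {set T}) : A \subset B -> r A <= r B. Proof. by case: hr => _ h _; apply: h. Qed.
Let r_sub (A B : {set T}) : r (A :|: B) + r (A :&: B) <= r A + r B. Proof. by case: hr. Qed.

Definition clo (S : {set T}) := [set x | r (x |: S) == r S].

Lemma sub_clo (S : {set T}) : S \subset clo S.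
Proof. by apply/subsetP => x xS; rewrite inE (setUidPr _) // sub1set. Qed.

Lemma Lext (S A : {set T}) : (forall x, x \in A -> r (x |: S) = r S) -> r (S :|: A) = r S.
Proof.
move=> H; rewrite -(set_enum A).
have : forall x, x \in enum A -> r (x |: S) = r S by move=> x; rewrite mem_enum; apply: H.
elim: (enum A) => [|y s IH] Hs.
  by congr r; apply/setP => z; rewrite !inE orbF.
have IH' := IH (fun x xs => Hs x (mem_behead (s:=y :: s) xs)).
have Hy := Hs y (mem_head _ _).
set X := S :|: [set x in s] in IH'.
have e1 : S :|: [set x in y :: s] = X :|: (y |: S).
  by apply/setP => z; rewrite !inE; case: (z == y); case: (z \in S); case: (z \in s).
have h1 := r_sub X (y |: S).
have h2 : r S <= r (X :&: (y |: S)).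
  by apply: r_mono; apply/subsetP => z zS; rewrite !inE zS !orbT.
have h3 : r S <= r (S :|: [set x in y :: s]) by apply: r_mono; apply: subsetUl.
rewrite e1 in h3 *; lia.
Qed.

Lemma r_clo (S : {set T}) : r (clo S) = r S.
Proof.
have -> : clo S = S :|: clo S by rewrite (setUidPr (sub_clo S)).
by apply: Lext => x; rewrite inE => /eqP.
Qed.

Lemma flat_clo (S : {set T}) : flat r (clo S).
Proof.
apply/forallP => x; apply/implyP => xn; rewrite r_clo.
have h1 : r (x |: S) != r S by move: xn; rewrite inE.
have h2 : r S <= r (x |: S) by apply: r_mono; apply: subsetUr.
have h3 : r (x |: S) <= r (x |: clo S) by apply: r_mono; apply: setUS; apply: sub_clo.
move/eqP: h1; lia.
Qed.

Lemma clo_mono (S S' : {set T}) : S \subset S' -> clo S \subset clo S'.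
Proof.
move=> hS; apply/subsetP => x; rewrite !inE => /eqP h.
have h1 := r_sub (x |: S) S'.
have e : (x |: S) :|: S' = x |: S' by rewrite -setUA (setUidPr hS).
have h2 : r S <= r ((x |: S) :&: S').
  by apply: r_mono; rewrite subsetI subsetUr hS.
have h3 : r S' <= r (x |: S') by apply: r_mono; apply: subsetUr.
rewrite e in h1; apply/eqP; lia.
Qed.

Lemma indep_sub (B S : {set T}) : r B = #|B| -> S \subset B -> r S = #|S|.
Proof.
move=> hB hS.
have h1 := r_sub S (B :\: S).
have e : S :|: (B :\: S) = B by apply/setP => z; rewrite !inE; case zS: (z \in S); rewrite ?orbF //= (subsetP hS).
have h2 := r_le (B :\: S).
have h3 := cardsDS hS.
have h4 := r_le S.
have h5 := subset_leq_card hS.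
rewrite e in h1; lia.
Qed.

Lemma clo_indep (B S : {set T}) : r B = #|B| -> S \subset B -> clo S :&: B = S.
Proof.
move=> hB hS; apply/setP => x; rewrite inE.
case xS: (x \in S).
  rewrite (subsetP (sub_clo S)) ?xS //=; by rewrite (subsetP hS).
case xB: (x \in B); rewrite ?andbF // andbT.
have e1 := indep_sub _ _ hB hS.
have e2 : r (x |: S) = #|x |: S|.
  by apply: (indep_sub _ _ hB); rewrite subUset sub1set xB hS.
by rewrite inE e1 e2 cardsU1 xS; apply/eqP; lia.
Qed.

Lemma basis_ex : exists B, r B = #|B| /\ r B = r setT.
Proof.
have h0 : r set0 == #|@set0 T|.
  by have := r_le set0; rewrite cards0; case: (r set0).
case: (@arg_maxnP _ set0 (fun I : {set T} => r I == #|I|) (fun I : {set T} => #|I|) h0) => I /eqP hI hmax.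
exists I; split => //.
rewrite -(setUT I); symmetry; apply: Lext => x _.
case xI: (x \in I).
  by rewrite (setUidPr _) // sub1set.
have a1 : r I <= r (x |: I) by apply: r_mono; apply: subsetUr.
have a2 := r_le (x |: I).
rewrite cardsU1 xI /= in a2.
case E: (r (x |: I) == #|x |: I|).
  have := hmax _ E; rewrite cardsU1 xI /=; lia.
move/eqP: E; rewrite cardsU1 xI /=; lia.
Qed.

End Mat.

Theorem lemma4p13 (d : nat) (T : finType) (r : {set T} -> nat) (J : seq nat) :
  matroid_rank r -> loopless r -> r [set: T] = d.+1 ->
  subset_of_range d J ->
  N_J (@boolean_rank d.+1) J <= N_J r J.
Proof.
move=> hr _ hT _.
have [B [hB1 hB2]] := @basis_ex _ _ hr.
have hBc : #|B| = d.+1 by rewrite -hB1 hB2.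
pose f (i : 'I_d.+1) : T := enum_val (cast_ord (esym hBc) i).
have finj : injective f.
  by move=> i j /enum_val_inj /cast_ord_inj.
have fB (S : {set 'I_d.+1}) : f @: S \subset B.
  by apply/subsetP => y /imsetP [x _ ->]; apply: enum_valP.
pose phi (S : {set 'I_d.+1}) := @clo T r (f @: S).
have rphi (S : {set 'I_d.+1}) : r (phi S) = #|S|.
  by rewrite /phi (@r_clo _ _ hr) (@indep_sub _ _ hr _ _ hB1 (fB S)) card_imset.
have phinj : injective phi.
  move=> S S' e; apply: (imset_inj finj).
  by rewrite -(@clo_indep _ _ hr _ _ hB1 (fB S)) -(@clo_indep _ _ hr _ _ hB1 (fB S')) /phi -/(phi S) -/(phi S') e.
rewrite /N_J.
have minj : injective (fun G : (size J).-tuple {set 'I_d.+1} => map_tuple phi G).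
  by move=> G1 G2 /(congr1 val) /= /(inj_map phinj) /val_inj.
rewrite -(card_imset _ minj).
apply: subset_leq_card; apply/subsetP => G' /imsetP [G].
rewrite !inE => /andP [/forallP h1 /forallP h2] ->.
apply/andP; split; apply/forallP => i.
  rewrite tnth_map (@flat_clo _ _ hr) /= rphi.
  by have /andP [_ ] := h1 i.
apply/implyP => hi; move/implyP: (h2 i) => /(_ hi).
have si : size G = size J by rewrite size_tuple.
rewrite /= (nth_map set0) ?si // (nth_map set0) ?si //.
rewrite !properEneq => /andP [ne sub]; apply/andP; split.
  by apply: contra ne => /eqP /phinj ->.
by apply: (@clo_mono _ _ hr); apply: imsetS.
Qed.
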